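(* In the non-contextual setting of the auction problem described in the context (a fixed set of $N$ ads participating at every round, with constant CTRs $\rho_{t,i}=\rho_i\in[0,1]$ for all $t$), run the exponential-weights algorithm with the IPS loss estimator described in the context on the predictor class $\widehat{\mathcal{F}}=\{(x,i)\mapsto\theta_i:\theta\in\{0,\tfrac1T,\tfrac2T,\dots,1\}^N\}$ with learning rate $\eta=\sqrt{\frac{\log T}{T}}$. Then $\mathbb{E}[\mathrm{Reg}]\le O(N\sqrt{T\log T})$.
   Context: Notation: for a vector $v$, $\mathrm{smax}_i v_i$ denotes the second-largest entry, and $\arg\max_i v_i$, $\arg\mathrm{smax}_i v_i$ the indices of the largest and second-largest entries; ties are broken by a fixed deterministic rule. Problem: There are $T$ rounds. At each round $t$ the learner (possibly after observing a context $x_t$, which here is irrelevant) chooses estimated CTRs $\tilde\rho_t\in[0,1]^N$; simultaneously each bidder $i$ chooses a bid $b_{t,i}\in[0,1]$ (possibly adversarially and adaptively, without knowing $\tilde\rho_t$). The winner is $i_t=\arg\max_i b_{t,i}\tilde\rho_{t,i}$, the runner-up $j_t=\arg\mathrm{smax}_i b_{t,i}\tilde\rho_{t,i}$, the payment per click $d_t=b_{t,j_t}\tilde\rho_{t,j_t}/\tilde\rho_{t,i_t}$; the ad $i_t$ is clicked with probability $\rho_{i_t}$ (unknown true CTR). The learner observes $b_t$ and the click indicator $c_t\in\{0,1\}$ and receives $c_td_t$. Regret: $\mathrm{Reg}=\sum_{t=1}^T\mathrm{smax}_i b_{t,i}\rho_i-\sum_{t=1}^T c_td_t$. Algorithm (exponential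 weights with IPS): given a finite class $\mathcal{F}$ of functions $f:\mathcal{X}\times[N]\to[0,1]$ and $\eta>0$, at round $t$ sample $f_t\sim q_t$ with $q_{t,f}\propto\exp(-\eta\sum_{s<t}\hat\ell_{s,f})$, set $\tilde\rho_{t,i}=f_t(x_t,i)$, run the auction, and define for each $f\in\mathcal{F}$ $$\hat\ell_{t,f}=\frac{\mathbb{1}\{i_t=\arg\max_i b_{t,i}f(x_t,i)\}}{p_{t,i_t}}\Big(1-c_t\frac{\mathrm{smax}_j b_{t,j}f(x_t,j)}{f(x_t,i_t)}\Big),\quad p_{t,i}=\Pr_{f_t\sim q_t}\{i_t=i\}.$$ *)

(* Defs.v *)
From mathcomp Require Import all_boot all_order all_algebra.
From mathcomp Require Import reals.
From mathcomp Require Import sequences exp.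
Set Implicit Arguments. Unset Strict Implicit. Unset Printing Implicit Defensive.
Import Order.TTheory GRing.Theory Num.Theory.
Local Open Scope ring_scope.

Section Auction.
Variable R : realType.
Variables N T : nat.

(* The discretized predictor class: theta in {0,1/T,...,1}^N, i.e.
   f_theta(x,i) = theta_i (context ignored: non-contextual setting). *)
Definition theta_class : finType := {ffun 'I_N -> 'I_T.+1}.
Definition pred_of (th : theta_class) (i : 'I_N) : R := (th i)%:R / T%:R.

Definition is_argmax (am : ('I_N -> R) -> 'I_N) :=
  forall v i, v i <= v (am v).
Definition is_argsmax (am asm : ('I_N -> R) -> 'I_N) :=
  forall v, asm v != am v /\ (forall i, i != am v -> v i <= v (asm v)).

Variables am asm : ('I_N -> R) -> 'I_N.

(* one round of history: (bids, sampled predictor f_t, click c_t) *)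
Definition hist_item := (('I_N -> R) * theta_class * bool)%type.
(* a deterministic adaptive adversary: maps past history (most recent
   first) to the bid vector of the current round *)
Definition adversary := seq hist_item -> ('I_N -> R).

Definition scores (b : 'I_N -> R) (f : theta_class) : 'I_N -> R :=
  fun i => b i * pred_of f i.

Definition weight (eta : R) (L : theta_class -> R) (f : theta_class) : R :=
  expR (- eta * L f) / \sum_(g : theta_class) expR (- eta * L g).

Definition winner (b : 'I_N -> R) (f : theta_class) : 'I_N := am (scores b f).

Definition winprob (eta : R) (L : theta_class -> R) (b : 'I_N -> R) (i : 'I_N) : R :=
  \sum_(f : theta_class | winner b f == i) weight eta L f.

Definition payment (b : 'I_N -> R) (f : theta_class) : R :=
  scores b f (asm (scores b f)) / pred_of f (winner b f).

Definition loss_est (eta : R) (L : theta_class -> R) (b : 'I_N -> R)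
  (ft : theta_class) (c : bool) (f : theta_class) : R :=
  let it := winner b ft in
  if winner b f == it then
    (1 - c%:R * (scores b f (asm (scores b f)) / pred_of f it))
      / winprob eta L b it
  else 0.

Definition click_prob (rho : 'I_N -> R) (i : 'I_N) (c : bool) : R :=
  if c then rho i else 1 - rho i.

Definition smax_val (b rho : 'I_N -> R) : R :=
  let v := fun i => b i * rho i in v (asm v).

(* expected value of sum_{remaining k rounds} (smax_i b_i rho_i - c_t d_t),
   given past history hist and cumulated loss estimates L *)
Fixpoint exp_regret (eta : R) (rho : 'I_N -> R) (adv : adversary)
  (k : nat) (hist : seq hist_item) (L : theta_class -> R) : R :=
  match k with
  | 0 => 0
  | k'.+1 =>
    let b := adv hist in
    \sum_(f : theta_class) weight eta L f *
      \sum_(c : bool) click_prob rho (winner b f) c *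
        (smax_val b rho - c%:R * payment b f
         + exp_regret eta rho adv k' ((b, f, c) :: hist)
             (fun g => L g + loss_est eta L b f c g))
  end.

Definition expected_regret (rho : 'I_N -> R) (adv : adversary) : R :=
  exp_regret (Num.sqrt (ln T%:R / T%:R)) rho adv T [::] (fun _ => 0).

End Auction.

(* Main.v *)
Require Import Defs.
From mathcomp Require Import all_boot all_order all_algebra.
From mathcomp Require Import reals.
From mathcomp Require Import sequences exp.
From mathcomp Require Import lra ring.
Import Order.TTheory GRing.Theory Num.Theory.
Local Open Scope ring_scope.

Section Proof.
Variables (R : realType) (N T : nat) (am asm : ('I_N -> R) -> 'I_N).
Hypotheses (Ham : is_argmax am) (Hasm : is_argsmax am asm).
Variable eta : R.
Hypothesis eta_gt0 : 0 < eta.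
Variable rho : 'I_N -> R.
Hypothesis Hrho : forall i, 0 <= rho i <= 1.

Local Notation F := (theta_class N T).

Definition Wt (L : F -> R) := \sum_(g : F) expR (- eta * L g).

Definition f0 : F := [ffun=> ord0].

Lemma Wt_gt0 L : 0 < Wt L.
Proof.
rewrite /Wt (bigD1 f0) //=.
have h1 := expR_gt0 (- eta * L f0).
have h2 : 0 <= \sum_(i | i != f0) expR (- eta * L i) by apply: sumr_ge0 => i _; exact: expR_ge0.
lra.
Qed.

Lemma weightE (L : F -> R) (f : F) : weight eta L f = expR (- eta * L f) / Wt L.
Proof. by []. Qed.

Lemma weight_gt0 (L : F -> R) (f : F) : 0 < weight eta L f.
Proof. by rewrite weightE divr_gt0 // ?expR_gt0 // Wt_gt0. Qed.

Lemma sum_weight (L : F -> R) : \sum_f weight eta L f = 1.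
Proof.
under eq_bigr do rewrite weightE.
by rewrite -mulr_suml divff // gt_eqF // Wt_gt0.
Qed.

Lemma winprob_gt0 (L : F -> R) b (f : F) : 0 < winprob am eta L b (winner am b f).
Proof.
rewrite /winprob (bigD1 f) //=.
have h1 := weight_gt0 L f.
have h2 : 0 <= \sum_(i | (winner am b i == winner am b f) && (i != f)) weight eta L i.
  by apply: sumr_ge0 => i _; exact: ltW (weight_gt0 _ _).
lra.
Qed.

Lemma click_sum i : \sum_c click_prob rho i c = 1.
Proof. by rewrite big_bool /=; ring. Qed.

Lemma click_ge0 i c : 0 <= click_prob rho i c.
Proof. have := Hrho i; case: c => /= /andP[h1 h2]; lra. Qed.

Variable b : 'I_N -> R.
Hypothesis Hb : forall i, 0 <= b i <= 1.

Lemma pred_ge0 (g : F) i : 0 <= pred_of R g i.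
Proof. by rewrite /pred_of divr_ge0 ?ler0n. Qed.

Lemma scores_ge0 (g : F) i : 0 <= scores b g i.
Proof. by rewrite /scores mulr_ge0 ?pred_ge0 //; case/andP: (Hb i). Qed.

Lemma pay_bnd (g : F) : 0 <= payment am asm b g <= 1.
Proof.
rewrite /payment /winner.
set v := scores b g.
have hv := Ham v (asm v).
have s0 := scores_ge0 g (asm v).
have p0 := pred_ge0 g (am v).
apply/andP; split; first by rewrite divr_ge0.
have [->|pn0] := eqVneq (pred_of R g (am v)) 0; first by rewrite invr0 mulr0.
have pp : 0 < pred_of R g (am v) by rewrite lt_def pn0 p0.
rewrite ler_pdivrMr // mul1r.
apply: (le_trans hv); rewrite /v /scores ler_piMl //.
by case/andP: (Hb (am (fun i => b i * pred_of R g i))).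
Qed.


Variable L : F -> R.
Local Notation w := (weight eta L).
Local Notation p := (winprob am eta L b).
Local Notation lh := (loss_est am asm eta L b).
Local Notation win := (winner am b).

Lemma lhE (ft : F) c (g : F) : lh ft c g =
  if win g == win ft then (1 - c%:R * payment am asm b g) / p (win g) else 0.
Proof. by rewrite /loss_est /=; case: eqP => // E; rewrite /payment -E. Qed.

Lemma one_sub_bnd (g : F) (c : bool) : 0 <= 1 - c%:R * payment am asm b g <= 1.
Proof. have := pay_bnd g; case: c => /= /andP[h1 h2]; apply/andP; split; lra. Qed.

Lemma lh_ge0 ft c g : 0 <= lh ft c g.
Proof.
rewrite lhE; case: ifP => // _.
have /andP[h1 _] := one_sub_bnd g c.
by rewrite divr_ge0 // ltW // winprob_gt0.
Qed.

Lemma lh_sq ft c g : w g * lh ft c g ^+ 2 <=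
   (if win g == win ft then w g else 0) * (p (win ft))^-2.
Proof.
rewrite lhE; case: eqP => E; last by rewrite expr0n /= !mulr0 mul0r.
rewrite -E.
have /andP[h1 h2] := one_sub_bnd g c.
have pp := winprob_gt0 L b g.
have wp := weight_gt0 L g.
rewrite ler_pM2l // expr_div_n ler_pdivrMr ?exprn_gt0 // mulrC mulVf ?expf_neq0 ?gt_eqF //.
rewrite expr2; nra.
Qed.

Definition Ex (X : F -> bool -> R) :=
  \sum_f w f * \sum_c click_prob rho (win f) c * X f c.

Lemma Ex_le X Y : (forall f c, X f c <= Y f c) -> Ex X <= Ex Y.
Proof.
move=> H; apply: ler_sum => f _; rewrite ler_pM2l ?weight_gt0 //.
apply: ler_sum => c _; apply: ler_wpM2l; [exact: click_ge0| exact: H].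
Qed.

Lemma Ex_add X Y : Ex (fun f c => X f c + Y f c) = Ex X + Ex Y.
Proof.
rewrite /Ex -big_split /=; apply: eq_bigr => f _.
rewrite -mulrDr -big_split /=; congr (_ * _); apply: eq_bigr => c _; ring.
Qed.

Lemma Ex_opp X : Ex (fun f c => - X f c) = - Ex X.
Proof.
rewrite /Ex -sumrN; apply: eq_bigr => f _.
rewrite -mulrN -sumrN; congr (_ * _); apply: eq_bigr => c _; ring.
Qed.

Lemma Ex_scale k X : Ex (fun f c => k * X f c) = k * Ex X.
Proof.
rewrite /Ex mulr_sumr; apply: eq_bigr => f _.
rewrite !mulr_sumr; apply: eq_bigr => c _; ring.
Qed.

Lemma Ex_const k : Ex (fun _ _ => k) = k.
Proof.
rewrite /Ex.
under eq_bigr do rewrite -mulr_suml click_sum mul1r.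
by rewrite -mulr_suml sum_weight mul1r.
Qed.

Lemma Ex_sum (G : F -> F -> bool -> R) :
  Ex (fun f c => \sum_g G g f c) = \sum_g Ex (G g).
Proof.
rewrite /Ex [RHS]exchange_big /=; apply: eq_bigr => f _.
rewrite -mulr_sumr; congr (_ * _).
under eq_bigr do rewrite mulr_sumr.
exact: exchange_big.
Qed.


Lemma Ex_lh (g : F) : Ex (fun f c => lh f c g) = 1 - rho (win g) * payment am asm b g.
Proof.
rewrite /Ex.
transitivity (\sum_f (if win f == win g then w f else 0) *
   ((1 - rho (win g) * payment am asm b g) / p (win g))).
  apply: eq_bigr => f _; case: (eqVneq (win f) (win g)) => E.
    rewrite E ?eqxx; congr (_ * _).
    under eq_bigr do rewrite lhE E eqxx. idtac.
    by rewrite big_bool /= /click_prob; ring.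
  rewrite mul0r; under eq_bigr do rewrite lhE eq_sym (negbTE E).
  by rewrite big_bool /=; ring.
rewrite -mulr_suml -big_mkcond /=.
have pp := winprob_gt0 L b g.
rewrite mulrC -mulrA mulVf ?mulr1 // gt_eqF //.
Qed.

Lemma sq_inner (f : F) (c : bool) : \sum_g w g * lh f c g ^+ 2 <= (p (win f))^-1.
Proof.
apply: (le_trans (ler_sum _ (fun g _ => lh_sq f c g))).
rewrite -mulr_suml -big_mkcond /=.
have pp := winprob_gt0 L b f.
rewrite -/(p (win f)).
by rewrite expr2 invfM mulrA mulfV ?mul1r // gt_eqF.
Qed.

Lemma Ex_sq : Ex (fun f c => \sum_g w g * lh f c g ^+ 2) <= N%:R.
Proof.
apply: (le_trans (@Ex_le (fun f c => \sum_g w g * lh f c g ^+ 2) (fun f c => (p (win f))^-1) sq_inner)).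
rewrite /Ex.
under eq_bigr do rewrite -mulr_suml click_sum mul1r.
rewrite (partition_big win xpredT) //=.
apply: (le_trans (y := \sum_(j : 'I_N) 1)); last by rewrite sumr_const card_ord.
apply: ler_sum => i _.
rewrite (eq_bigr (fun f => w f * (p i)^-1)); last by move=> f /eqP ->.
rewrite -mulr_suml -/(p i).
have [->|pn0] := eqVneq (p i) 0; first by rewrite mul0r.
by rewrite mulfV.
Qed.


Lemma expR_neg_bnd (x : R) : 0 <= x -> expR (- x) <= 1 - x + x ^+ 2.
Proof.
move=> x0.
have e : expR x = expR (x / 2) * expR (x / 2) by rewrite -expRD -splitr.
have h := expR_ge1Dx (x / 2).
have yp := expR_gt0 x.
have hy : (1 + x / 2) ^+ 2 <= expR x.
  by rewrite e expr2 ler_pM // addr_ge0 // divr_ge0.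
rewrite expRN -[(expR x)^-1]mul1r ler_pdivrMr //.
have q0 : 0 <= 1 - x + x ^+ 2 by rewrite expr2; nra.
have := ler_wpM2l q0 hy.
apply: le_trans; rewrite !expr2; nra.
Qed.

Lemma Wt_shift (l : F -> R) :
  Wt (fun g => L g + l g) = Wt L * \sum_g w g * expR (- eta * l g).
Proof.
rewrite /Wt mulr_sumr; apply: eq_bigr => g _.
rewrite weightE mulrA mulrCA mulfV ?mulr1 ?gt_eqF ?Wt_gt0 //.
by rewrite mulrDr expRD.
Qed.

Lemma psi_step (l : F -> R) : (forall g, 0 <= l g) ->
  ln (Wt (fun g => L g + l g)) / eta <=
  ln (Wt L) / eta - \sum_g w g * l g + eta * \sum_g w g * l g ^+ 2.
Proof.
move=> l0.
set S := \sum_g w g * expR (- eta * l g).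
have W0 := Wt_gt0 L.
have W1 := Wt_gt0 (fun g => L g + l g).
have S0 : 0 < S.
  by move: W1; rewrite Wt_shift pmulr_rgt0.
have hD : ln (Wt (fun g => L g + l g)) - ln (Wt L) <= S - 1.
  have := expR_ge1Dx (ln (Wt (fun g => L g + l g)) - ln (Wt L)).
  rewrite expRD expRN !lnK ?posrE // Wt_shift -/S mulrAC mulfV ?gt_eqF // mul1r.
  lra.
have hS : S <= \sum_g w g * (1 - eta * l g + (eta * l g) ^+ 2).
  apply: ler_sum => g _; rewrite ler_pM2l ?weight_gt0 // mulNr.
  by apply: expR_neg_bnd; rewrite mulr_ge0 // ltW.
have hS2 : \sum_g w g * (1 - eta * l g + (eta * l g) ^+ 2) =
   1 - eta * \sum_g w g * l g + eta * (eta * \sum_g w g * l g ^+ 2).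
  transitivity (\sum_g w g - \sum_g eta * (w g * l g) + \sum_g eta * (eta * (w g * l g ^+ 2))).
    by rewrite -sumrB -big_split /=; apply: eq_bigr => g _; ring.
  by rewrite sum_weight -!mulr_sumr.
rewrite ler_pdivrMr //.
have -> : (ln (Wt L) / eta - \sum_g w g * l g + eta * \sum_g w g * l g ^+ 2) * eta
   = ln (Wt L) - eta * \sum_g w g * l g + eta * (eta * \sum_g w g * l g ^+ 2).
  by field; rewrite gt_eqF.
lra.
Qed.


Lemma Ex_cpay : Ex (fun f c => c%:R * payment am asm b f) =
  \sum_f w f * (rho (win f) * payment am asm b f).
Proof.
apply: eq_bigr => f _; rewrite big_bool /= /click_prob; ring.
Qed.

Variable fs : F.
Definition psi (L0 : F -> R) := ln (Wt L0) / eta + L0 fs.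

Lemma psi_ge0 (L0 : F -> R) : 0 <= psi L0.
Proof.
rewrite /psi.
have W0 := Wt_gt0 L0.
have e0 := expR_gt0 (- eta * L0 fs).
have hle : expR (- eta * L0 fs) <= Wt L0.
  rewrite /Wt (bigD1 fs) //= lerDl; apply: sumr_ge0 => i _; exact: expR_ge0.
have : - eta * L0 fs <= ln (Wt L0).
  by rewrite -ler_ln ?posrE // expRK in hle.
move=> h.
have : - L0 fs <= ln (Wt L0) / eta.
  by rewrite ler_pdivlMr // mulNr mulrC -mulNr.
lra.
Qed.

Hypothesis Hfs : smax_val asm b rho - rho (win fs) * payment am asm b fs <= T%:R^-1.

Lemma Ex_lin5 (a : R) (X1 X2 X3 X4 : F -> bool -> R) :
  Ex (fun f c => a + X1 f c + X2 f c + eta * X3 f c + X4 f c) =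
  a + Ex X1 + Ex X2 + eta * Ex X3 + Ex X4.
Proof.
by rewrite !Ex_add Ex_const Ex_scale.
Qed.

Lemma step_bound (K : R) (Rest : F -> bool -> R) :
  (forall f c, Rest f c <= psi (fun g => L g + lh f c g) + K) ->
  \sum_f w f * \sum_c click_prob rho (win f) c *
     (smax_val asm b rho - c%:R * payment am asm b f + Rest f c)
  <= psi L + (eta * N%:R + T%:R^-1) + K.
Proof.
move=> HR.
change (Ex (fun f c => smax_val asm b rho - c%:R * payment am asm b f + Rest f c) <= psi L + (eta * N%:R + T%:R^-1) + K).
pose X1 := fun (f : F) (c : bool) => - (c%:R * payment am asm b f).
pose X2 := fun f c => - \sum_g w g * lh f c g.
pose X3 := fun f c => \sum_g w g * lh f c g ^+ 2.
pose X4 := fun f c => lh f c fs.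
pose a := smax_val asm b rho + (psi L + K).
have hle : Ex (fun f c => smax_val asm b rho - c%:R * payment am asm b f + Rest f c) <=
   Ex (fun f c => a + X1 f c + X2 f c + eta * X3 f c + X4 f c).
  apply: Ex_le => f c; have := HR f c; have := psi_step (lh f c) (lh_ge0 f c).
  rewrite /a /X1 /X2 /X3 /X4 /psi /=; lra.
apply: (le_trans hle).
rewrite Ex_lin5 /X1 /X2 /X4 Ex_lh !Ex_opp Ex_cpay Ex_sum.
have e2 : \sum_g Ex (fun f c => w g * lh f c g) = \sum_g w g * (1 - rho (win g) * payment am asm b g).
  by apply: eq_bigr => g _; rewrite -Ex_lh; exact: Ex_scale.
rewrite e2.
have e : \sum_g w g * (1 - rho (win g) * payment am asm b g) =
         1 - \sum_g w g * (rho (win g) * payment am asm b g).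
  transitivity (\sum_g w g - \sum_g w g * (rho (win g) * payment am asm b g)).
    by rewrite -sumrB; apply: eq_bigr => g _; ring.
  by rewrite sum_weight.
rewrite e.
have hs : Ex X3 <= N%:R by exact: Ex_sq.
have : eta * Ex X3 <= eta * N%:R by rewrite ler_pM2l.
move: Hfs; rewrite /a; lra.
Qed.

End Proof.

Section Disc.
Variables (R : realType) (N T : nat) (am asm : ('I_N -> R) -> 'I_N).
Hypotheses (Ham : is_argmax am) (Hasm : is_argsmax am asm).

Lemma smax_mono (v w : 'I_N -> R) (e : R) :
  (forall i, v i <= w i + e) -> v (asm v) <= w (asm w) + e.
Proof.
move=> H.
have [hne hv] := Hasm v; have [hne' hw] := Hasm w.
case: (eqVneq (asm v) (am w)) => E.
  have h1 := Ham v (asm v).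
  have h2 : am v != am w by rewrite -E eq_sym.
  have h3 := hw _ h2.
  have h4 := H (am v).
  lra.
have := hw _ E; have := H (asm v); lra.
Qed.

Variable rho : 'I_N -> R.
Hypothesis Hrho : forall i, 0 <= rho i <= 1.
Hypothesis T0 : (0 < T)%N.

Definition fsel : theta_class N T :=
  [ffun i => insubd ord0 (Num.truncn (rho i * T%:R))].

Lemma fsel_val i : val (fsel i) = Num.truncn (rho i * T%:R).
Proof.
rewrite ffunE val_insubd.
have /andP[h0 h1] := Hrho i.
have -> : (Num.truncn (rho i * T%:R) < T.+1)%N = true; last by [].
rewrite ltnS truncn_le_nat.
have hT : (0 : R) <= T%:R by rewrite ler0n.
rewrite -natr1; nra.
Qed.

Lemma fsel_approx i : pred_of R fsel i <= rho i /\ rho i <= pred_of R fsel i + T%:R^-1.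
Proof.
have /andP[h0 h1] := Hrho i.
have Tp : (0 : R) < T%:R by rewrite ltr0n.
have x0 : 0 <= rho i * T%:R by rewrite mulr_ge0 // ltW.
have /andP[l1 l2] := truncn_itv x0.
rewrite /pred_of fsel_val; split.
  by rewrite ler_pdivrMr.
have e : ((Num.truncn (rho i * T%:R))%:R : R) / T%:R + T%:R^-1 = ((Num.truncn (rho i * T%:R))%:R + 1) / T%:R by field; rewrite gt_eqF.
rewrite e ler_pdivlMr // natr1; exact: ltW.
Qed.

Lemma disc (b : 'I_N -> R) : (forall i, 0 <= b i <= 1) ->
  smax_val asm b rho - rho (winner am b fsel) * payment am asm b fsel <= T%:R^-1.
Proof.
move=> Hb.
rewrite /smax_val /payment /winner.
set vt := scores b fsel.
set vr := fun i => b i * rho i.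
set i0 := am vt.
have Tp : (0 : R) < T%:R by rewrite ltr0n.
have hm : vr (asm vr) <= vt (asm vt) + T%:R^-1.
  apply: smax_mono => i; rewrite /vr /vt /scores.
  have [a1 a2] := fsel_approx i; have /andP[b0 b1] := Hb i.
  have /andP[r0 r1] := Hrho i.
  have := @pred_ge0 R N T fsel i.
  nra.
have s0 : 0 <= vt (asm vt) by rewrite /vt (@scores_ge0 R N T b Hb).
have s1 := Ham vt (asm vt).
have [a1 a2] := fsel_approx i0.
have p0 := @pred_ge0 R N T fsel i0.
have /andP[b0 b1] := Hb i0.
have [E|pn0] := eqVneq (pred_of R fsel i0) 0.
  have z : vt i0 = 0 by rewrite /vt /scores E mulr0.
  move: s1; rewrite -/i0 z => s1.
  rewrite E invr0 !mulr0 subr0.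
  move: hm; rewrite /vr /= => hm; lra.
have pp : 0 < pred_of R fsel i0 by rewrite lt_def pn0 p0.
have : vt (asm vt) <= rho i0 * (vt (asm vt) / pred_of R fsel i0).
  rewrite mulrA ler_pdivlMr //; nra.
move: hm; rewrite /vr /= => hm; lra.
Qed.
End Disc.

Lemma arith (R : realType) (t n : R) : 2 <= t -> 1 <= n ->
  n * ln (t + 1) / Num.sqrt (ln t / t) + t * (Num.sqrt (ln t / t) * n + t^-1)
  <= 4 * n * Num.sqrt (t * ln t).
Proof.
move=> t2 n1.
have tp : 0 < t by lra.
have ti : t * t^-1 = 1 by rewrite mulfV // gt_eqF.
have ti0 : 0 <= t^-1 by rewrite invr_ge0 ltW.
have ha : 1 - ln t <= t^-1.
  by have := expR_ge1Dx (- ln t); rewrite expRN lnK ?posrE.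
have a2 : 1/2 <= ln t by nra.
set a := ln t in ha a2 *.
have ap : 0 < a by lra.
have hl : ln (t + 1) <= 2 * a.
  have -> : 2 * a = ln (t ^+ 2) by rewrite lnXn // mulr_natl.
  by rewrite ler_ln ?posrE ?exprn_gt0 //; [rewrite expr2; nra | lra].
set u := Num.sqrt t; set v := Num.sqrt a.
have up : 0 < u by rewrite sqrtr_gt0.
have vp : 0 < v by rewrite sqrtr_gt0.
have u2 : u ^+ 2 = t by rewrite sqr_sqrtr // ltW.
have v2 : v ^+ 2 = a by rewrite sqr_sqrtr // ltW.
have e1 : Num.sqrt (a / t) = v / u by rewrite sqrtrM ?ltW // sqrtrV // ltW.
have e2 : Num.sqrt (t * a) = u * v by rewrite sqrtrM // ltW.
rewrite e1 e2.
have uv1 : 1 <= u * v.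
  have : 1 <= (u * v) ^+ 2 by rewrite exprMn u2 v2; nra.
  have : 0 <= u * v by rewrite mulr_ge0 // ltW.
  rewrite expr2; nra.
have f1 : n * ln (t + 1) / (v / u) = n * ln (t + 1) * u / v.
  by field; rewrite !gt_eqF.
have f2 : t * (v / u * n + t^-1) = n * (u * v) + 1.
  rewrite -u2; field; rewrite gt_eqF //.
rewrite f1 f2.
have : n * ln (t + 1) * u / v <= 2 * n * (u * v).
  rewrite ler_pdivrMr //.
  have -> : 2 * n * (u * v) * v = 2 * (v ^+ 2) * n * u by rewrite expr2; ring.
  rewrite v2.
  have : 0 <= n * u by rewrite mulr_ge0 // ?ltW //; lra.
  nra.
nra.
Qed.

Section Main.
Variables (R : realType) (N T : nat) (am asm : ('I_N -> R) -> 'I_N).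
Hypotheses (Ham : is_argmax am) (Hasm : is_argsmax am asm).
Variable eta : R.
Hypothesis eta_gt0 : 0 < eta.
Variable rho : 'I_N -> R.
Hypothesis Hrho : forall i, 0 <= rho i <= 1.
Variable adv : adversary R N T.
Hypothesis Hadv : forall h i, 0 <= adv h i <= 1.
Variable fs : theta_class N T.
Hypothesis Hfs : forall b : 'I_N -> R, (forall i, 0 <= b i <= 1) ->
  smax_val asm b rho - rho (winner am b fs) * payment am asm b fs <= T%:R^-1.

Lemma main_ind k : forall hist L,
  exp_regret am asm eta rho adv k hist L <=
  psi R N T eta fs L + k%:R * (eta * N%:R + T%:R^-1).
Proof.
elim: k => [|k IH] hist L /=.
  by rewrite mul0r addr0; exact: psi_ge0.
have HH := (@step_bound R N T am asm Ham eta eta_gt0 rho Hrho (adv hist) (Hadv hist) L fs (@Hfs (adv hist) (Hadv hist)) (k%:R * (eta * N%:R + T%:R^-1)) (fun f c => exp_regret am asm eta rho adv k ((adv hist, f, c) :: hist)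
           (fun g => L g + loss_est am asm eta L (adv hist) f c g)) (fun f c => IH _ _)).
apply: le_trans; first exact HH.
by rewrite -natr1 le_eqVlt; apply/orP; left; apply/eqP; ring.
Qed.
End Main.

Theorem corollary1 (R : realType) :
  exists C : R, 0 < C /\
  forall (N T : nat) (am asm : ('I_N -> R) -> 'I_N),
    (2 <= N)%N -> (2 <= T)%N ->
    is_argmax am -> is_argsmax am asm ->
    forall rho : 'I_N -> R, (forall i, 0 <= rho i <= 1) ->
    forall adv : adversary R N T,
      (forall h i, 0 <= adv h i <= 1) ->
      expected_regret am asm rho adv <= C * N%:R * Num.sqrt (T%:R * ln T%:R).
Proof.
exists 4; split; first by [].
move=> N T am asm N2 T2 Ham Hasm rho Hrho adv Hadv.
have t2 : (2 : R) <= T%:R by rewrite (ler_nat R 2 T).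
have n1 : (1 : R) <= N%:R by rewrite (ler_nat R 1 N) ltnW.
have lp : 0 < ln (T%:R : R) by rewrite ln_gt0 //; lra.
set eta := Num.sqrt (ln (T%:R : R) / T%:R).
have eta_gt0 : 0 < eta by rewrite sqrtr_gt0 divr_gt0 //; lra.
have T0 : (0 < T)%N by apply: leq_trans T2.
have H := @main_ind R N T am asm Ham eta eta_gt0 rho Hrho adv Hadv _ (@disc R N T am asm Ham Hasm rho Hrho T0) T [::] (fun _ => 0).
rewrite /expected_regret -/eta.
apply: (le_trans H).
have W0 : Wt R N T eta (fun _ : theta_class N T => 0) = (T.+1%:R) ^+ N.
  rewrite /Wt; under eq_bigr do rewrite mulr0 expR0.
  by rewrite sumr_const card_ffun !card_ord natrX.
rewrite /psi W0 lnXn ?ltr0n // addr0 -natr1.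
have := @arith R _ _ t2 n1; rewrite -/eta.
move=> h; apply: le_trans h; by rewrite [N%:R * ln _]mulr_natl.
Qed.
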